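(* Let $m\ge2$, $w$ an infinite periodic or Sturmian word over $\{0,1\}$, and $A=A(m,w)$ with the $\mathbb{Z}_2$-grading in which $z_1^{(1)},a$ are even and $b$ is odd; let $A^\#$ be $A$ with an external unit adjoined (with induced grading). Then $\overline{\exp}^{gr}(A^\#)\le\exp^{gr}(A)+1$.
   Context: $F$ is a field of characteristic zero. $A(m,w)$: basis $\{a,b,z_j^{(i)}: i\ge1,1\le j\le m+w_i\}$, products $z_j^{(i)}a=z_{j+1}^{(i)}$ for $j<m+w_i$, $z_{m+w_i}^{(i)}b=z_1^{(i+1)}$, all other products zero. Grading: $A_0=\mathrm{span}\{a,z_j^{(i)}:i\text{ odd}\}$, $A_1=\mathrm{span}\{b,z_j^{(i)}:i\text{ even}\}$; $A^\#=A\oplus F1$, $A_0^\#=A_0\oplus F1$, $A_1^\#=A_1$. Graded codimension $c_n^{gr}(B)=\sum_k\binom nk c_{k,n-k}(B)$, where $c_{k,n-k}(B)$ is the dimension of the space of polynomials multilinear in even $x_1..x_k$ and odd $y_1..y_{n-k}$ modulo graded identities of $B$; $\overline{\exp}^{gr}(B)=\limsup\sqrt[n]{c_n^{gr}(B)}$ and $\exp^{gr}(B)$ is the limit when it exists (for $A$ it exists and equals $\Phi(1/(m+\pi(w)))$, $\Phi(x)=x^{-x}(1-x)^{-(1-x)}$, $\pi(w)$ the slope of $w$). *)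

(* Defs.v *)
From HB Require Import structures.
From mathcomp Require Import all_boot all_order all_algebra.
From Stdlib Require Import ClassicalEpsilon.
From Stdlib Require Reals.
Set Implicit Arguments. Unset Strict Implicit. Unset Printing Implicit Defensive.
Import GRing.Theory.

Definition pb (P : Prop) : bool :=
  if excluded_middle_informative P then true else false.

(* An infinite word w = w_1 w_2 ... over {0,1} is  w : nat -> bool  (w 0 unused). *)
Definition periodic_word (w : nat -> bool) : Prop :=
  exists p, (0 < p)%N /\ forall i, (1 <= i)%N -> w (i + p)%N = w i.

Definition factors (w : nat -> bool) (n : nat) : {set n.-tuple bool} :=
  [set t : n.-tuple bool |
     pb (exists i, (1 <= i)%N /\ t = [tuple w (i + val k)%N | k < n])].

Definition sturmian_word (w : nat -> bool) : Prop :=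
  forall n, #|factors w n| = n.+1.

(* basis of A: a, b, z_j^(i) (only the valid indices (i,j) are used) *)
Inductive bas := Ba | Bb | Bz of nat & nat.

Definition validz (m : nat) (w : nat -> bool) (i j : nat) : bool :=
  (1 <= i)%N && (1 <= j <= m + w i)%N.

Section Alg.
Variable F : fieldType.
Local Open Scope ring_scope.

(* Elements of A^# = A (+) F1 are coordinate functions  option bas -> F,
   None being the coordinate of the adjoined unit 1.  A is the subspace of
   finitely supported vectors with zero None-coordinate. *)

(* product of A on coordinate vectors:
   z_j^(i) a = z_(j+1)^(i) (j < m + w_i),  z_(m+w_i)^(i) b = z_1^(i+1), others 0 *)
Definition mulA (m : nat) (w : nat -> bool) (u v : bas -> F) (c : bas) : F :=
  match c with
  | Ba => 0
  | Bb => 0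
  | Bz i j =>
      if (1 <= i)%N && (2 <= j <= m + w i)%N then u (Bz i j.-1) * v Ba
      else if (2 <= i)%N && (j == 1)%N then u (Bz i.-1 (m + w i.-1)) * v Bb
      else 0
  end.

(* product of A^#: (l,u)(l',v) = (l l', l v + l' u + u v) *)
Definition mulS (m : nat) (w : nat -> bool) (u v : option bas -> F)
  : option bas -> F :=
  fun o => match o with
  | None => u None * v None
  | Some c => u None * v (Some c) + v None * u (Some c)
              + mulA m w (fun c => u (Some c)) (fun c => v (Some c)) c
  end.

(* z-coordinates finitely supported, on valid indices, with upper index
   of the given parity (odd upper index = even component) *)
Definition zsupp (m : nat) (w : nat -> bool) (par : bool) (u : option bas -> F)
  : Prop :=
  exists N, forall i j, u (Some (Bz i j)) != 0 ->
     [&& validz m w i j, odd i == par & (i < N)%N].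

(* A_0 = span{a, z_j^(i) : i odd} *)
Definition inA0 m w (u : option bas -> F) : Prop :=
  u None = 0 /\ u (Some Bb) = 0 /\ zsupp m w true u.
(* A_1 = span{b, z_j^(i) : i even} ;  also A^#_1 = A_1 *)
Definition inA1 m w (u : option bas -> F) : Prop :=
  u None = 0 /\ u (Some Ba) = 0 /\ zsupp m w false u.
(* A^#_0 = A_0 (+) F1 *)
Definition inAs0 m w (u : option bas -> F) : Prop :=
  u (Some Bb) = 0 /\ zsupp m w true u.

End Alg.

(* nonassociative monomials (binary trees) in variables indexed by nat *)
Inductive mono := Leaf of nat | Node of mono & mono.

Fixpoint leaves (t : mono) : seq nat :=
  match t with Leaf i => [:: i] | Node l r => leaves l ++ leaves r end.

Section Codim.
Variable F : fieldType.
Variable I : Type.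
Variable mul : (I -> F) -> (I -> F) -> (I -> F).
Variables ev od : (I -> F) -> Prop.
Local Open Scope ring_scope.

Fixpoint evalm (s : nat -> I -> F) (t : mono) : I -> F :=
  match t with
  | Leaf i => s i
  | Node l r => mul (evalm s l) (evalm s r)
  end.

Definition poly := seq (F * mono).

Definition evalp (s : nat -> I -> F) (p : poly) : I -> F :=
  fun o => \sum_(ct <- p) ct.1 * evalm s ct.2 o.

(* p lies in P_{k,n-k}: multilinear in variables 0..n-1, where variables
   0..k-1 are the even x_1..x_k and k..n-1 the odd y_1..y_{n-k} *)
Definition multilin (n : nat) (p : poly) : bool :=
  all (fun ct => perm_eq (leaves ct.2) (iota 0 n)) p.

Definition graded_subst (k l : nat) (s : nat -> I -> F) : Prop :=
  (forall i, (i < k)%N -> ev (s i)) /\ (forall i, (k <= i < k + l)%N -> od (s i)).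

Definition indep_mod_id (k l r : nat) (f : 'I_r -> poly) : Prop :=
  (forall i, multilin (k + l) (f i)) /\
  forall lam : 'I_r -> F,
    (forall s, graded_subst k l s ->
       forall o, \sum_(i < r) lam i * evalp s (f i) o = 0) ->
    forall i, lam i = 0.

(* d = dim P_{k,l} / (P_{k,l} /\ Id^gr) *)
Definition is_codim (k l d : nat) : Prop :=
  (exists f : 'I_d -> poly, indep_mod_id k l f) /\
  ~ (exists f : 'I_d.+1 -> poly, indep_mod_id k l f).

Definition codim (k l : nat) : nat := epsilon (inhabits 0%N) (is_codim k l).

Definition codim_gr (n : nat) : nat :=
  (\sum_(k < n.+1) 'C(n, k) * codim k (n - k))%N.

End Codim.

Import Reals.
Local Open Scope R_scope.

Definition nroot (n c : nat) : R :=
  if Nat.eqb c 0 then 0 else Rpower (INR c) (/ INR n).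

Definition limsup_root_le (c : nat -> nat) (L : R) : Prop :=
  forall eps, 0 < eps -> exists N, forall n, (N <= n)%nat -> nroot n (c n) <= L + eps.

Definition lim_root (c : nat -> nat) (L : R) : Prop :=
  Un_cv (fun n => nroot n (c n)) L.

(* Main.v *)
Require Import Defs.
From HB Require Import structures.
From mathcomp Require Import all_boot all_order all_algebra.
From Stdlib Require Import Reals.
From Stdlib Require Import Lra Lia ClassicalEpsilon Classical FunctionalExtensionality.
From mathcomp Require Import zify ring.
Set Implicit Arguments. Unset Strict Implicit. Unset Printing Implicit Defensive.
Import GRing.Theory.
Section Kern.
Variable F : fieldType.
Local Open Scope ring_scope.
Lemma kern (J : finType) r (M : 'I_r -> J -> F) : (#|J| < r)%nat ->
  exists lam : 'I_r -> F, (exists i, lam i != 0) /\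
     forall j, \sum_(i < r) lam i * M i j = 0.
Proof.
move=> hJ.
pose A : 'M[F]_(r, #|J|) := \matrix_(i < r, j < #|J|) M i (enum_val j).
have hK : kermx A != 0.
  rewrite kermx_eq0 /row_free; apply/negP => /eqP h.
  by have := rank_leq_col A; rewrite h leqNgt hJ.
have [i0 hi0] : exists i0, row i0 (kermx A) != 0.
  apply/existsP; apply: contraR hK; rewrite negb_exists => /forallP h.
  apply/eqP/matrixP => i j; have /negPn/eqP := h i.
  by move/matrixP => /(_ 0 j); rewrite !mxE.
exists (fun i => kermx A i0 i); split.
  apply/existsP; apply: contraR hi0; rewrite negb_exists => /forallP h.
  apply/eqP/rowP => j; rewrite [LHS]mxE [RHS]mxE; exact/eqP/negPn/h.
move=> j.
have := mulmx_ker A => /(congr1 (row i0)); rewrite row_mul row0.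
move/rowP => /(_ (enum_rank j)); rewrite [LHS]mxE [RHS]mxE => h.
rewrite -[in RHS]h; apply: eq_bigr => i _; idtac.
by rewrite [row _ _ _ _]mxE [A _ _]mxE enum_rankK.
Qed.
End Kern.

Fixpoint eqm (t u : mono) : bool :=
  match t, u with
  | Leaf i, Leaf j => (i == j)
  | Node a b, Node c d => eqm a c && eqm b d
  | _, _ => false
  end.
Lemma eqmP : Equality.axiom eqm.
Proof.
elim=> [i|a iha b ihb] [j|c d] /=; try by constructor.
  by apply: (iffP eqP) => [->|[]].
apply: (iffP andP) => [[/iha -> /ihb ->]//|[<- <-]].
by split; [apply/iha|apply/ihb].
Qed.
HB.instance Definition _ := hasDecEq.Build mono eqmP.

Fixpoint depth (t : mono) : nat :=
  match t with Leaf _ => 0 | Node l r => (maxn (depth l) (depth r)).+1 end.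

Fixpoint trees (d n : nat) : seq mono :=
  match d with
  | 0 => [seq Leaf i | i <- iota 0 n]
  | d'.+1 => trees d' n ++ [seq Node x y | x <- trees d' n, y <- trees d' n]
  end.

Lemma trees_mono n d d' t : (d <= d')%nat -> t \in trees d n -> t \in trees d' n.
Proof.
move=> h; elim: d' h => [|d' ih]; first by rewrite leqn0 => /eqP ->.
rewrite leq_eqVlt => /orP [/eqP -> //|h] ht /=.
by rewrite mem_cat ih.
Qed.

Lemma in_trees n t : all (fun i => (i < n)%nat) (leaves t) -> t \in trees (depth t) n.
Proof.
elim: t => [i|l ihl r ihr] /=.
  rewrite andbT => hi; apply/mapP; exists i => //; by rewrite mem_iota.
rewrite all_cat => /andP [hl hr]; rewrite mem_cat; apply/orP; right.
apply: allpairs_f.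
  by apply: (trees_mono (leq_maxl _ _)); apply: ihl.
by apply: (trees_mono (leq_maxr _ _)); apply: ihr.
Qed.

Lemma leaves_gt0 t : (0 < size (leaves t))%nat.
Proof. by elim: t => [//|l ihl r ihr] /=; rewrite size_cat addn_gt0 ihl. Qed.

Lemma depth_lt t : (depth t < size (leaves t))%nat.
Proof.
elim: t => [//|l ihl r ihr] /=; rewrite size_cat.
have := leaves_gt0 l; have := leaves_gt0 r.
lia.
Qed.

Section Gen.
Variable F : fieldType.
Variable I : Type.
Variable mul : (I -> F) -> (I -> F) -> (I -> F).
Variables ev od : (I -> F) -> Prop.
Local Open Scope ring_scope.

Definition coef (p : Defs.poly F) (t : mono) : F := \sum_(ct <- p | ct.2 == t) ct.1.

Lemma coef_cons ct p t : coef (ct :: p) t = (if ct.2 == t then ct.1 else 0) + coef p t.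
Proof. by rewrite /coef big_cons; case: ifP; rewrite ?add0r. Qed.

Lemma evalp_coef (Ms : seq mono) s (p : Defs.poly F) o : uniq Ms ->
  all (fun ct => ct.2 \in Ms) p ->
  evalp mul s p o = \sum_(t <- Ms) coef p t * evalm mul s t o.
Proof.
move=> hu; elim: p => [|ct p ih] /=.
  by move=> _; rewrite /evalp big_nil big1 // => t _; rewrite /coef big_nil mul0r.
move=> /andP [hc hp]; rewrite /evalp big_cons -/(evalp mul s p o) ih //.
under eq_bigr do rewrite coef_cons mulrDl.
rewrite big_split /=; congr (_ + _).
rewrite (bigD1_seq ct.2) //= eqxx big1 ?addr0 // => t /negbTE ht.
by rewrite eq_sym ht mul0r.
Qed.

Lemma mem_multilin n (p : Defs.poly F) : multilin n p ->
  all (fun ct => ct.2 \in undup (trees n n)) p.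
Proof.
move=> /allP h; apply/allP => ct /h /= hp.
rewrite mem_undup; apply: (trees_mono _ (in_trees _)).
  by have := depth_lt ct.2; rewrite (perm_size hp) size_iota => /ltnW.
apply/allP => i; rewrite (perm_mem hp) mem_iota; lia.
Qed.

Lemma indep_bound k l r (f : 'I_r -> Defs.poly F) :
  indep_mod_id mul ev od k l f -> (r <= size (undup (trees (k + l) (k + l))))%nat.
Proof.
move=> [hm hi]; rewrite leqNgt; apply/negP => hr.
set Ms := undup (trees (k + l) (k + l)) in hr.
have hJ : (#|'I_(size Ms)| < r)%nat by rewrite card_ord.
have [lam [[i0 hi0] hl]] := kern (fun i (j : 'I_(size Ms)) => coef (f i) (nth (Leaf 0) Ms j)) hJ.
move/eqP: hi0; apply; apply: hi => s _ o.
under eq_bigr do rewrite (@evalp_coef Ms) ?undup_uniq ?mem_multilin // big_distrr.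
rewrite exchange_big /= big_seq_cond big1 // => t /andP [ht _].
under eq_bigr do rewrite mulrA.
rewrite -big_distrl /=.
have hti : (index t Ms < size Ms)%nat by rewrite index_mem.
by have := hl (Ordinal hti); rewrite /= nth_index // => ->; rewrite mul0r.
Qed.

Lemma pbE (P : Prop) : pb P <-> P.
Proof. by rewrite /pb; case: excluded_middle_informative. Qed.

Lemma codim_spec k l : is_codim mul ev od k l (codim mul ev od k l).
Proof.
rewrite /codim; apply: epsilon_spec.
pose P := fun r => pb (exists f : 'I_r -> Defs.poly F, indep_mod_id mul ev od k l f).
have ex0 : exists r, P r.
  exists 0%nat; apply/pbE; exists (fun _ => [::]).
  by split => [i|lam _ i]; case: i.
have ub : forall r, P r -> (r <= size (undup (trees (k + l) (k + l))))%nat.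
  by move=> r /pbE [f hf]; apply: indep_bound hf.
case: (ex_maxnP ex0 ub) => d /pbE hd hmax; exists d; split => //.
move=> hs; have := hmax d.+1; rewrite ltnn => H; apply: notF; apply: H.
by apply/pbE.
Qed.

Lemma span k l d (g : 'I_d -> Defs.poly F) :
  indep_mod_id mul ev od k l g ->
  ~ (exists f : 'I_d.+1 -> Defs.poly F, indep_mod_id mul ev od k l f) ->
  forall h, multilin (k + l) h ->
  exists c : 'I_d -> F, forall s, graded_subst ev od k l s ->
     forall o, evalp mul s h o = \sum_(i < d) c i * evalp mul s (g i) o.
Proof.
move=> [hgm hgi] hmax h hh.
pose f := fun i : 'I_d.+1 => match unlift ord_max i with Some j => g j | None => h end.
have hfm : forall i, multilin (k + l) (f i).
  by move=> i; rewrite /f; case: unlift.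
have : ~ (forall lam : 'I_d.+1 -> F,
    (forall s, graded_subst ev od k l s ->
       forall o, \sum_(i < d.+1) lam i * evalp mul s (f i) o = 0) ->
    forall i, lam i = 0).
  by move=> H; apply: hmax; exists f; split.
move=> /not_all_ex_not [lam Hl]; have [hv] := imply_to_and _ _ Hl; move=> /not_all_ex_not [i0 hi0].
have hfl : forall j : 'I_d, f (widen_ord (leqnSn d) j) = g j.
  move=> j; rewrite /f (_ : widen_ord _ j = lift ord_max j) ?liftK //.
  by apply: val_inj; rewrite /= /bump leqNgt ltn_ord.
have hfm' : f ord_max = h by rewrite /f unlift_none.
have hlm : lam ord_max != 0.
  apply/negP => /eqP hl0; apply: hi0.
  have := hgi (fun j => lam (widen_ord (leqnSn d) j)).
  move=> H; have {}H : forall j : 'I_d, lam (widen_ord (leqnSn d) j) = 0.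
    apply: H => s hs o; have := hv s hs o.
    by rewrite big_ord_recr /= hl0 mul0r addr0; under eq_bigr do rewrite hfl.
  case: (unliftP ord_max i0) => [j ->|-> //].
  by rewrite (_ : lift ord_max j = widen_ord (leqnSn d) j) ?H //; apply: val_inj; rewrite /= /bump leqNgt ltn_ord.
exists (fun j => - lam (widen_ord (leqnSn d) j) / lam ord_max) => s hs o.
have := hv s hs o; rewrite big_ord_recr /= hfm'.
under eq_bigr do rewrite hfl.
move=> /eqP; rewrite addrC addr_eq0 => /eqP H.
apply: (mulfI hlm); rewrite H big_distrr /= -sumrN; apply: eq_bigr => j _.
by field.
Qed.
End Gen.

Fixpoint del (P : pred nat) (t : mono) : option mono :=
  match t with
  | Leaf i => if P i then Some (Leaf i) else None
  | Node l r =>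
      match del P l, del P r with
      | Some a, Some b => Some (Node a b)
      | Some a, None => Some a
      | None, x => x
      end
  end.

Fixpoint rename (g : nat -> nat) (t : mono) : mono :=
  match t with Leaf i => Leaf (g i) | Node l r => Node (rename g l) (rename g r) end.

Lemma leaves_rename g t : leaves (rename g t) = map g (leaves t).
Proof. by elim: t => [//|l ihl r ihr] /=; rewrite ihl ihr map_cat. Qed.

Lemma del_leaves P t : match del P t with
   | None => filter P (leaves t) = [::]
   | Some t' => leaves t' = filter P (leaves t) end.
Proof.
elim: t => [i|l ihl r ihr] /=; first by case: (P i).
rewrite filter_cat.
case: (del P l) ihl => [a|] ihl; case: (del P r) ihr => [b|] ihr /=;
  by rewrite ?ihl ?ihr ?cats0.
Qed.

Section Gen2.
Variable F : fieldType.
Variable I : Type.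
Variable mul : (I -> F) -> (I -> F) -> (I -> F).
Local Open Scope ring_scope.

Lemma evalm_rename s g t : evalm mul s (rename g t) = evalm mul (fun i => s (g i)) t.
Proof. by elim: t => [//|l ihl r ihr] /=; rewrite ihl ihr. Qed.

Lemma evalm_ext s1 s2 t : (forall i, i \in leaves t -> s1 i = s2 i) ->
  evalm mul s1 t = evalm mul s2 t.
Proof.
elim: t => [i|l ihl r ihr] /= h; first by apply: h; rewrite inE.
by rewrite ihl ?ihr // => i hi; apply: h; rewrite mem_cat hi ?orbT.
Qed.

Variable e : I -> F.
Hypothesis mul1l : forall x, mul e x = x.
Hypothesis mul1r : forall x, mul x e = x.

Lemma evalm_del s P t : (forall i, i \in leaves t -> ~~ P i -> s i = e) ->
  evalm mul s t = match del P t with None => e | Some t' => evalm mul s t' end.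
Proof.
elim: t => [i|l ihl r ihr] /= h.
  by case: ifP => // /negbT; apply: h; rewrite inE.
rewrite ihl ?ihr; first 1 last.
- by move=> i hi; apply: h; rewrite mem_cat hi orbT.
- by move=> i hi; apply: h; rewrite mem_cat hi.
by case: (del P l) => [a|]; case: (del P r) => [b|] /=; rewrite ?mul1l ?mul1r.
Qed.

Definition lin (c : F) (x y : I -> F) : I -> F := fun o => c * x o + y o.
Hypothesis mul_linl : forall c x y z, mul (lin c x y) z = lin c (mul x z) (mul y z).
Hypothesis mul_linr : forall c x y z, mul z (lin c x y) = lin c (mul z x) (mul z y).

Definition upd (s : nat -> I -> F) v x : nat -> I -> F := fun i => if i == v then x else s i.

Lemma evalm_upd_out s v x t : v \notin leaves t -> evalm mul (upd s v x) t = evalm mul s t.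
Proof.
move=> h; apply: evalm_ext => i hi; rewrite /upd; case: eqP => // ei.
by move: h; rewrite -ei hi.
Qed.

Lemma evalm_lin s v c x y t : count_mem v (leaves t) = 1%nat ->
  evalm mul (upd s v (lin c x y)) t = lin c (evalm mul (upd s v x) t) (evalm mul (upd s v y) t).
Proof.
elim: t => [i|l ihl r ihr] /=.
  by rewrite addn0 /upd; case: eqP => // ->; rewrite eqxx.
rewrite count_cat; case hl: (count_mem v (leaves l)) => [|[|n]] //= h.
  have hr : count_mem v (leaves r) = 1%nat by [].
  have nl : v \notin leaves l by rewrite -has_pred1 has_count hl.
  by rewrite ihr // !(evalm_upd_out _ _ nl) mul_linr.
have hr : count_mem v (leaves r) = 0%nat by case: (count_mem v (leaves r)) h.
have nr : v \notin leaves r by rewrite -has_pred1 has_count hr.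
by rewrite ihl // !(evalm_upd_out _ _ nr) mul_linl.
Qed.
End Gen2.

Section Asharp.
Variable F : fieldType.
Variable m : nat.
Variable w : nat -> bool.
Local Open Scope ring_scope.

Definition e1 : option bas -> F := fun o => if o is None then 1 else 0.

Lemma mulA0l v c : @Defs.mulA F m w (fun _ => 0) v c = 0 :> F.
Proof. by case: c => // i j /=; case: ifP; rewrite ?mul0r //; case: ifP; rewrite ?mul0r. Qed.
Lemma mulA0r v c : @Defs.mulA F m w v (fun _ => 0) c = 0 :> F.
Proof. by case: c => // i j /=; case: ifP; rewrite ?mulr0 //; case: ifP; rewrite ?mulr0. Qed.

Lemma mulS1l x : @mulS F m w e1 x = x.
Proof.
apply: functional_extensionality => [[c|]] /=; last by rewrite mul1r.
by rewrite mulA0l mul1r mulr0 !addr0.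
Qed.
Lemma mulS1r x : @mulS F m w x e1 = x.
Proof.
apply: functional_extensionality => [[c|]] /=; last by rewrite mulr1.
by rewrite mulA0r mul1r mulr0 add0r addr0.
Qed.

Lemma mulA_linl c x y z o : @Defs.mulA F m w (fun b => c * x b + y b) z o = c * @Defs.mulA F m w x z o + @Defs.mulA F m w y z o.
Proof. case: o => [||i j] /=; rewrite ?mulr0 ?addr0 //; case: ifP => _; [ring|]; case: ifP => _; [ring|]; ring. Qed.
Lemma mulA_linr c x y z o : @Defs.mulA F m w z (fun b => c * x b + y b) o = c * @Defs.mulA F m w z x o + @Defs.mulA F m w z y o.
Proof. case: o => [||i j] /=; rewrite ?mulr0 ?addr0 //; case: ifP => _; [ring|]; case: ifP => _; [ring|]; ring. Qed.

Lemma mulS_linl c x y z : @mulS F m w (lin c x y) z = lin c (@mulS F m w x z) (@mulS F m w y z).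
Proof.
apply: functional_extensionality => [[b|]]; rewrite /lin /=; last ring.
rewrite (mulA_linl c (fun b => x (Some b)) (fun b => y (Some b))); ring.
Qed.
Lemma mulS_linr c x y z : @mulS F m w z (lin c x y) = lin c (@mulS F m w z x) (@mulS F m w z y).
Proof.
apply: functional_extensionality => [[b|]]; rewrite /lin /=; last ring.
rewrite (mulA_linr c (fun b => x (Some b)) (fun b => y (Some b))); ring.
Qed.
End Asharp.

Section Ren.
Variables k l : nat.
Variable T : {set 'I_k}.

Definition inT (i : nat) : bool := [exists x in T, val x == i].
Definition keepT (i : nat) : bool := inT i || (k <= i)%nat.
Definition Lk := filter keepT (iota 0 (k + l)).
Definition tau (i : nat) : nat := count keepT (iota 0 i).
Definition sig (x : nat) : nat := nth 0%nat Lk x.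

Lemma inT_lt i : inT i -> (i < k)%nat.
Proof. by rewrite /inT => /existsP [x /andP [_ /eqP <-]]; apply: ltn_ord. Qed.

Lemma count_inT : count inT (iota 0 k) = #|T|.
Proof.
rewrite -val_enum_ord count_map cardE /enum_mem size_filter count_filter.
apply: eq_count => x /=; rewrite andbT /inT.
apply/existsP/idP => [[y /andP [hy /eqP /val_inj <-]] //|hx].
by exists x; rewrite hx eqxx.
Qed.

Lemma Lk_cat : Lk = filter inT (iota 0 k) ++ iota k l.
Proof.
rewrite /Lk iotaD filter_cat add0n; congr (_ ++ _).
  apply: eq_in_filter => i; rewrite mem_iota /keepT => /andP [_ hi].
  by rewrite (leqNgt k i) hi orbF.
rewrite (eq_in_filter (a2 := predT)) ?filter_predT // => i.
by rewrite mem_iota /keepT => /andP [-> _]; rewrite orbT.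
Qed.

Lemma size_Lk : size Lk = (#|T| + l)%nat.
Proof. by rewrite Lk_cat size_cat size_filter count_inT size_iota. Qed.

Lemma map_tau n : map tau (filter keepT (iota 0 n)) = iota 0 (count keepT (iota 0 n)).
Proof.
elim: n => [//|n ih]; rewrite -addn1 iotaD filter_cat map_cat ih count_cat /= add0n.
rewrite /tau; case: (keepT n) => /=; last by rewrite !addn0 cats0.
by rewrite addn1 -addn1 iotaD.
Qed.

Lemma sig_tau i : i \in Lk -> sig (tau i) = i.
Proof.
move=> hi; rewrite /sig.
have hj : (index i Lk < size Lk)%nat by rewrite index_mem.
suff -> : tau i = index i Lk by rewrite nth_index.
have := nth_map 0%nat 0%nat tau hj; rewrite nth_index // => <-.
rewrite /Lk map_tau nth_iota; first by rewrite add0n.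
by move: hj; rewrite /Lk size_filter.
Qed.

Lemma sig_inT x : (x < #|T|)%nat -> inT (sig x).
Proof.
move=> hx; rewrite /sig Lk_cat nth_cat size_filter count_inT hx.
have : nth 0%nat (filter inT (iota 0 k)) x \in filter inT (iota 0 k).
  by apply: mem_nth; rewrite size_filter count_inT.
by rewrite mem_filter => /andP [].
Qed.

Lemma sig_odd x : (#|T| <= x < #|T| + l)%nat -> (k <= sig x < k + l)%nat.
Proof.
move=> /andP [h1 h2]; rewrite /sig Lk_cat nth_cat size_filter count_inT ltnNge h1 /=.
rewrite nth_iota; move: (#|T|) h1 h2 => c h1 h2; lia.
Qed.

Lemma keepT_Lk i : (i < k + l)%nat -> keepT i -> i \in Lk.
Proof. by move=> h1 h2; rewrite /Lk mem_filter h2 mem_iota. Qed.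
End Ren.

Lemma inT_ord k (T : {set 'I_k}) (x : 'I_k) : inT T x = (x \in T).
Proof.
rewrite /inT; apply/existsP/idP => [[y /andP [hy /eqP /val_inj <-]] //|hx].
by exists x; rewrite hx eqxx.
Qed.

Lemma count_iota_mem v n : (v < n)%nat -> count_mem v (iota 0 n) = 1%nat.
Proof. by move=> h; rewrite count_uniq_mem ?iota_uniq // mem_iota add0n h. Qed.

Lemma del_perm P t n : perm_eq (leaves t) (iota 0 n) ->
  match del P t with
  | None => size (filter P (iota 0 n)) = 0%nat
  | Some t' => is_true (perm_eq (leaves t') (filter P (iota 0 n))) end.
Proof.
move=> hp; have hf := perm_filter P hp; have := del_leaves P t.
case: (del P t) => [t'|] h; first by rewrite h.
by rewrite -(perm_size hf) h.
Qed.

Section Main.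
Variable F : fieldType.
Variable m : nat.
Variable w : nat -> bool.
Variables k l r : nat.
Variable f : 'I_r -> Defs.poly F.
Hypothesis hf : forall i, multilin (k + l) (f i).
Local Open Scope ring_scope.

Notation mS := (@mulS F m w).
Notation e := (@e1 F).

Definition G (lam : 'I_r -> F) s o := \sum_(i < r) lam i * evalp mS s (f i) o.

Definition red (x : option bas -> F) := x = e \/ x None = 0.

Lemma evalp_lin i s v c x y o : (v < k + l)%nat ->
  evalp mS (upd s v (lin c x y)) (f i) o = c * evalp mS (upd s v x) (f i) o + evalp mS (upd s v y) (f i) o.
Proof.
move=> hv; rewrite /evalp mulr_sumr -big_split; apply: eq_big_seq => ct hct /=.
have hp : perm_eq (leaves ct.2) (iota 0 (k + l)) by have /allP := hf i; apply.
rewrite (evalm_lin (@mulS_linl F m w) (@mulS_linr F m w)).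
  by rewrite /lin; ring.
by rewrite (permP hp) count_iota_mem.
Qed.

Lemma G_lin lam s v c x y o : (v < k + l)%nat ->
  G lam (upd s v (lin c x y)) o = c * G lam (upd s v x) o + G lam (upd s v y) o.
Proof.
move=> hv; rewrite /G mulr_sumr -big_split; apply: eq_bigr => i _ /=.
rewrite evalp_lin //; ring.
Qed.

Lemma inAs0_e : inAs0 m w e.
Proof. by split => //; exists 0%nat => i j /=; rewrite eqxx. Qed.

Lemma inAs0_drop (x : option bas -> F) : inAs0 m w x -> inAs0 m w (fun o => if o is None then 0 else x o).
Proof. by move=> [h1 [N h2]]; split => //; exists N => i j /h2. Qed.

Lemma graded_upd (s : nat -> option bas -> F) v x : graded_subst (inAs0 m w) (inA1 m w) k l s -> (v < k)%nat ->
  inAs0 m w x -> graded_subst (inAs0 m w) (inA1 m w) k l (upd s v x).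
Proof.
move=> [h1 h2] hv hx; split => i hi; rewrite /upd; case: eqP => [ei|_].
- by [].
- by apply: h1.
- by move: hi; rewrite ei; lia.
- by apply: h2.
Qed.

Lemma reduce lam :
  (forall s, graded_subst (inAs0 m w) (inA1 m w) k l s ->
     (forall i, (i < k)%nat -> red (s i)) -> forall o, G lam s o = 0) ->
  forall s, graded_subst (inAs0 m w) (inA1 m w) k l s -> forall o, G lam s o = 0.
Proof.
move=> hb.
suff H : forall p, (p <= k)%nat -> forall s, graded_subst (inAs0 m w) (inA1 m w) k l s ->
     (forall i, (p <= i < k)%nat -> red (s i)) -> forall o, G lam s o = 0.
  by move=> s hs; apply: (H k) => // i; lia.
elim=> [|p ih] hp s hs hr o.
  by apply: hb => // i hi; apply: hr; rewrite hi.
have hpk : (p < k)%nat by [].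
pose a := fun o : option bas => if o is None then 0 else s p o.
have hsp : s = upd s p (lin (s p None) e a).
  apply: functional_extensionality => i; rewrite /upd; case: eqP => // ->.
  apply: functional_extensionality => [[b|]]; rewrite /lin /a /e1 /=; ring.
rewrite hsp G_lin; last lia.
have hsp' : inAs0 m w (s p) by case: hs => h1 _; apply: h1.
rewrite (ih (ltnW hpk) _ (graded_upd hs hpk inAs0_e)); last first.
- move=> i hi; rewrite /upd; case: eqP => [_|ne]; first by left.
  by apply: hr; move: hi ne; lia.
rewrite (ih (ltnW hpk) _ (graded_upd hs hpk (inAs0_drop hsp'))); last first.
- move=> i hi; rewrite /upd; case: eqP => [_|ne]; first by right.
  by apply: hr; move: hi ne; lia.
by rewrite mulr0 addr0.
Qed.

Definition codimA j := codim mS (inA0 m w) (inA1 m w) j l.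
Definition bnd (T : {set 'I_k}) : nat := if (#|T| + l == 0)%nat then 1%nat else codimA #|T|.

Definition hyps (T : {set 'I_k}) s := [/\ graded_subst (inAs0 m w) (inA1 m w) k l s,
   (forall i, (i < k)%nat -> red (s i)) & (forall x : 'I_k, (x \in T) = (s x None == 0))].

Lemma hyps_e T s i : hyps T s -> (i < k + l)%nat -> ~~ keepT T i -> s i = e.
Proof.
move=> [_ hr hT] hi; rewrite /keepT negb_or -ltnNge => /andP [h1 h2].
have := hT (Ordinal h2); rewrite -inT_ord /= (negbTE h1) => /esym/negbT hs.
by case: (hr i h2) => // h; move: hs; rewrite h eqxx.
Qed.

Lemma perT T : exists D, (D <= bnd T)%nat /\ exists M : 'I_r -> 'I_D -> F,
  forall lam, (forall j, \sum_(i < r) lam i * M i j = 0) ->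
  forall s, hyps T s -> forall o, G lam s o = 0.
Proof.
case: (boolP (#|T| + l == 0)%nat) => hT0.
  exists 1%nat; split; first by rewrite /bnd hT0.
  exists (fun i _ => \sum_(ct <- f i) ct.1) => lam hl s hs o.
  have hev : forall i, evalp mS s (f i) o = (\sum_(ct <- f i) ct.1) * e o.
    move=> i; rewrite /evalp big_distrl; apply: eq_big_seq => ct hct /=.
    have hp : perm_eq (leaves ct.2) (iota 0 (k + l)) by have /allP := hf i; apply.
    have := del_perm (keepT T) hp.
    rewrite (evalm_del (@mulS1l F m w) (@mulS1r F m w) (P := keepT T)).
      case: (del (keepT T) ct.2) => [t'|] // hp'.
      have := perm_size hp'; rewrite -/(Lk l T) size_Lk (eqP hT0).
      by have := leaves_gt0 t'; case: (size (leaves t')).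
    move=> i0 hi0; apply: (hyps_e hs).
    by move: hi0; rewrite (perm_mem hp) mem_iota.
  rewrite /G; under eq_bigr do rewrite hev mulrA.
  by rewrite -big_distrl /= (hl ord0) mul0r.
have [[g hg] hmax] := codim_spec mS (inA0 m w) (inA1 m w) #|T| l.
pose hp i := [seq (ct.1, rename (tau T) (odflt ct.2 (del (keepT T) ct.2))) | ct <- f i].
have hLk : size (Lk l T) = (#|T| + l)%nat by rewrite size_Lk.
have hml : forall i, multilin (#|T| + l) (hp i).
  move=> i; rewrite /multilin all_map; apply/allP => ct hct /=.
  have hp0 : perm_eq (leaves ct.2) (iota 0 (k + l)) by have /allP := hf i; apply.
  have := del_perm (keepT T) hp0.
  case: (del (keepT T) ct.2) => [t'|] /= hp'; last first.
    by move: hT0; rewrite -hLk /Lk hp'.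
  rewrite leaves_rename; apply: perm_trans (perm_map _ hp') _.
  by rewrite map_tau -size_filter -/(Lk l T) hLk.
have [C hC] := choice (fun i c => forall s, graded_subst (inA0 m w) (inA1 m w) #|T| l s ->
     forall o, evalp mS s (hp i) o = \sum_(j < codimA #|T|) c j * evalp mS s (g j) o)
  (fun i => span hg hmax (hml i)).
exists (codimA #|T|); split; first by rewrite /bnd (negbTE hT0).
exists C => lam hl s hs o.
pose b := fun x => s (sig l T x).
have hb : graded_subst (inA0 m w) (inA1 m w) #|T| l b.
  case: hs => [[he ho] _ hT]; split => x hx; rewrite /b.
    have hin := sig_inT l hx; have hlt := inT_lt hin.
    have := hT (Ordinal hlt); rewrite -inT_ord /= hin => /esym/eqP hN.
    by case: (he _ hlt) => h1 h2; split.
  by apply: ho; apply: sig_odd.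
have hev : forall i, evalp mS s (f i) o = evalp mS b (hp i) o.
  move=> i; rewrite /evalp big_map; apply: eq_big_seq => ct hct /=; congr (_ * _).
  have hp0 : perm_eq (leaves ct.2) (iota 0 (k + l)) by have /allP := hf i; apply.
  have := del_perm (keepT T) hp0.
  rewrite (evalm_del (@mulS1l F m w) (@mulS1r F m w) (P := keepT T)); last first.
    move=> i0 hi0; apply: (hyps_e hs).
    by move: hi0; rewrite (perm_mem hp0) mem_iota.
  case: (del (keepT T) ct.2) => [t'|] /= hp'; last first.
    by move: hT0; rewrite -hLk /Lk hp'.
  rewrite evalm_rename.
  suff -> : evalm mS (fun i0 => b (tau T i0)) t' = evalm mS s t' by [].
  apply: evalm_ext => i0 hi0; rewrite /b sig_tau //.
  by rewrite /Lk -(perm_mem hp').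
rewrite /G; under eq_bigr do rewrite hev hC // big_distrr.
rewrite exchange_big big1 //= => j _.
under eq_bigr do rewrite mulrA.
by rewrite -big_distrl /= hl mul0r.
Qed.

Lemma main_bound : indep_mod_id mS (inAs0 m w) (inA1 m w) k l f ->
  (r <= \sum_(T : {set 'I_k}) bnd T)%nat.
Proof.
move=> [_ hi].
have H : forall T : {set 'I_k}, exists p : {D : nat & 'I_r -> 'I_D -> F},
   (tag p <= bnd T)%nat /\ forall lam, (forall j, \sum_(i < r) lam i * tagged p i j = 0) ->
   forall s, hyps T s -> forall o, G lam s o = 0.
  by move=> T; have [D [hD [M hM]]] := perT T; exists (Tagged (fun D => 'I_r -> 'I_D -> F) M).
have [Dm hDm] := choice _ H.
pose J := {T : {set 'I_k} & 'I_(tag (Dm T))}.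
rewrite leqNgt; apply/negP => hr.
have hJ : (#|{: J}| < r)%nat.
  apply: leq_ltn_trans hr; rewrite card_tagged sumnE big_map big_enum /=.
  by apply: leq_sum => T _; rewrite card_ord; case: (hDm T).
have [lam [[i0 hi0] hl]] := kern (fun i (p : J) => tagged (Dm (tag p)) i (tagged p)) hJ.
move/eqP: hi0; apply; apply: hi.
apply: reduce => s hs hr' o.
pose T := [set x : 'I_k | s x None == 0].
have hyT : hyps T s by split => // x; rewrite inE.
case: (hDm T) => _; apply => //.
by move=> j; apply: (hl (Tagged (fun T => 'I_(tag (Dm T))) j)).
Qed.
End Main.

Lemma sum_card k (Fn : nat -> nat) :
  (\sum_(T : {set 'I_k}) Fn #|T| = \sum_(j < k.+1) 'C(k, j) * Fn j)%nat.
Proof.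
rewrite (partition_big (fun T : {set 'I_k} => inord #|T| : 'I_k.+1) predT) //=.
apply: eq_bigr => j _.
have hc : forall T : {set 'I_k}, (#|T| <= k)%nat by move=> T; have := max_card T; rewrite card_ord.
rewrite (eq_bigr (fun _ => Fn j)); last first.
  by move=> T /eqP <-; rewrite inordK // ltnS hc.
rewrite sum_nat_const; congr (_ * _).
have -> : 'C(k, j) = #|[set A : {set 'I_k} | #|A| == j]| by rewrite card_draws card_ord.
apply: eq_card => T; rewrite inE /=.
by rewrite unfold_in /= inordK // ltnS hc.
Qed.

Lemma binC n k j : (j <= k)%nat -> (k <= n)%nat ->
  ('C(n, k) * 'C(k, j) = 'C(n, j + (n - k)) * 'C(j + (n - k), j))%nat.
Proof.
move=> hjk hkn.
have hX : (0 < j`! * (k - j)`! * (n - k)`!)%nat by rewrite !muln_gt0 !fact_gt0.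
apply/eqP; rewrite -(eqn_pmul2r hX); apply/eqP.
have ht : (j + (n - k) <= n)%nat by lia.
have htj : (j <= j + (n - k))%nat by lia.
have e1 := bin_fact hkn; have e2 := bin_fact hjk.
have e3 := bin_fact ht; have e4 := bin_fact htj.
have h1 : (j + (n - k) - j = n - k)%nat by lia.
have h2 : (n - (j + (n - k)) = k - j)%nat by lia.
rewrite h1 in e4; rewrite h2 in e3.
transitivity (n`!); [rewrite -e1 -e2|rewrite -e3 -e4]; ring.
Qed.

Lemma leq_term n (Fn : 'I_n -> nat) i : (Fn i <= \sum_(j < n) Fn j)%nat.
Proof. by rewrite (bigD1 i) //= leq_addr. Qed.

Lemma codimS_le (F : fieldType) m w k l :
  (codim (@mulS F m w) (inAs0 m w) (inA1 m w) k l <= \sum_(T : {set 'I_k}) bnd F m w l T)%nat.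
Proof.
have [[g hg] _] := codim_spec (@mulS F m w) (inAs0 m w) (inA1 m w) k l.
exact: (main_bound hg.1 hg).
Qed.

Lemma cgr_bound (F : fieldType) m w n :
 (codim_gr (@mulS F m w) (inAs0 m w) (inA1 m w) n <=
  \sum_(k < n.+1) \sum_(j < k.+1) ((j + (n - k) == 0)%nat +
     'C(n, j + (n - k)) * codim_gr (@mulS F m w) (inA0 m w) (inA1 m w) (j + (n - k))))%nat.
Proof.
rewrite /codim_gr; apply: leq_sum => k _.
have hkn : (k <= n)%nat by rewrite -ltnS.
apply: (leq_trans (leq_mul (leqnn _) (codimS_le F m w k (n - k)))).
apply: (leq_trans (leq_mul (leqnn _) (_ : _ <= \sum_(j < k.+1) 'C(k, j) * ((j + (n - k) == 0)%nat + codimA F m w (n - k) j))%nat)).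
  rewrite -(sum_card k (fun j => (j + (n - k) == 0)%nat + codimA F m w (n - k) j)%nat); apply: leq_sum => T _; rewrite /bnd.
  by case: ifP => _ //; rewrite add0n.
rewrite big_distrr /=; apply: leq_sum => j _.
have hjk : (j <= k)%nat by rewrite -ltnS.
rewrite mulnA binC // mulnDr; apply: leq_add.
  case: eqP => [h0|_]; last by rewrite !muln0.
  have hnk : (n - k = 0)%nat by lia.
  have -> : nat_of_ord j = 0%nat by lia.
  by rewrite hnk !bin0.
rewrite -mulnA leq_mul2l; apply/orP; right.
set t := (j + (n - k))%nat.
have htj : (j < t.+1)%nat by rewrite /t; lia.
have := leq_term (fun i : 'I_t.+1 => 'C(t, i) * codim (@mulS F m w) (inA0 m w) (inA1 m w) i (t - i))%nat (Ordinal htj).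
by rewrite /= /t /codimA (_ : j + (n - k) - j = n - k)%nat //; lia.
Qed.
Section Anal.
Local Open Scope R_scope.

Lemma nroot_ge0 n c : 0 <= nroot n c.
Proof. rewrite /nroot; case: (Nat.eqb c 0); [lra| unfold Rpower; left; apply: exp_pos]. Qed.

Lemma Rpower_pos x y : 0 < Rpower x y.
Proof. unfold Rpower; apply: exp_pos. Qed.

Lemma pow_of_nroot n c q : (0 < n)%nat -> nroot n c <= q -> INR c <= q ^ n.
Proof.
move=> hn; rewrite /nroot; case E: (Nat.eqb c 0).
  move/Nat.eqb_eq: E => -> h /=; apply: pow_le; lra.
move/Nat.eqb_neq: E => E h.
have hc : 0 < INR c by apply: lt_0_INR; lia.
have hn' : INR n <> 0 by apply: not_0_INR; lia.
have -> : INR c = (Rpower (INR c) (/ INR n)) ^ n.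
  rewrite -Rpower_pow; last by apply: Rpower_pos.
  by rewrite Rpower_mult Rinv_l // Rpower_1.
apply: pow_incr; split => //; left; apply: Rpower_pos.
Qed.

Lemma nroot_of_pow n c y : (0 < n)%nat -> 0 < y -> INR c <= y ^ n -> nroot n c <= y.
Proof.
move=> hn hy h; rewrite /nroot; case E: (Nat.eqb c 0); first lra.
move/Nat.eqb_neq: E => E.
have hc : 0 < INR c by apply: lt_0_INR; lia.
have hn' : INR n <> 0 by apply: not_0_INR; lia.
apply: Rle_trans (Rle_Rpower_l _ _ (/ INR n) _ (conj hc h)) _.
  by left; apply: Rinv_0_lt_compat; apply: lt_0_INR; lia.
by rewrite -Rpower_pow // Rpower_mult Rinv_r // Rpower_1 //; lra.
Qed.

Lemma binq n t q : 0 <= q -> INR ('C(n, t)) * q ^ t <= (1 + q) ^ n.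
Proof.
move=> hq; elim: n t => [|n ih] [|t].
- by rewrite bin0 /=; lra.
- by rewrite bin0n /=; have := pow_le q t.+1 hq; nra.
- by rewrite bin0 /=; have := pow_R1_Rle (1 + q) n.+1; simpl; lra.
rewrite binS plus_INR /=; have := ih t; have := ih t.+1; simpl.
have := pow_le q t hq; have := pow_le (1 + q) n; nra.
Qed.

Lemma INR_sum_le m (g : 'I_m -> nat) B : 0 <= B -> (forall i, INR (g i) <= B) ->
  INR (\sum_(i < m) g i)%nat <= INR m * B.
Proof.
elim: m g => [|m ih] g hB h; first by rewrite big_ord0 /=; lra.
rewrite big_ord_recr plus_INR S_INR /=.
have := ih (fun i => g (widen_ord (leqnSn m) i)) hB (fun i => h _).
have := h ord_max; rewrite Rmult_plus_distr_r Rmult_1_l => h1 h2; exact: Rplus_le_compat.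
Qed.

Lemma bound_start (q : R) : 0 < q -> forall N (u : nat -> R),
  (forall t, (N <= t)%nat -> u t <= q ^ t) -> exists K, 1 <= K /\ forall t, u t <= K * q ^ t.
Proof.
move=> hq; elim=> [|N ih] u h.
  by exists 1; split; [lra| move=> t; rewrite Rmult_1_l; apply: h].
have hu' : forall t, (N <= t)%nat -> (if t == N then q ^ t else u t) <= q ^ t.
  move=> t ht; case: eqP => [_|ne]; first lra.
  by apply: h; move: ht ne; lia.
have [K [hK hu]] := ih _ hu'.
have hqN : 0 < q ^ N by apply: pow_lt.
exists (K + Rabs (u N) / q ^ N); split.
  have : 0 <= Rabs (u N) / q ^ N by apply: Rmult_le_pos; [apply: Rabs_pos| left; apply: Rinv_0_lt_compat].
  lra.
move=> t; have := hu t; case: eqP => [->|_] h1.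
  have : Rabs (u N) / q ^ N * q ^ N = Rabs (u N) by rewrite /Rdiv Rmult_assoc Rinv_l ?Rmult_1_r //; lra.
  have := Rle_abs (u N); nra.
have := pow_le q t (Rlt_le _ _ hq); have : 0 <= Rabs (u N) / q ^ N by apply: Rmult_le_pos; [apply: Rabs_pos| left; apply: Rinv_0_lt_compat].
nra.
Qed.

Lemma C3 p : INR ('C(p.+3, 3)) * 6 = (INR p + 3) * (INR p + 2) * (INR p + 1).
Proof.
have h : ('C(p.+3, 3) * 6 = (p + 3) * (p + 2) * (p + 1))%nat.
  have := bin_ffact p.+3 3; rewrite (_ : 3`! = 6)%nat // => ->.
  rewrite !ffactnS ffactn0 /=; lia.
move: ('C(p.+3, 3)) h => c h.
have hR : INR (c * 6)%nat = INR ((p + 3) * (p + 2) * (p + 1))%nat by rewrite h.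
rewrite -!multE -!plusE !mult_INR !plus_INR in hR.
have e6 : INR 6 = 6 by simpl; lra.
have e3 : INR 3 = 3 by simpl; lra.
have e2 : INR 2 = 2 by simpl; lra.
rewrite e6 e3 e2 INR_1 in hR; lra.
Qed.

Lemma poly_bound M d : 0 < M -> 0 < d -> exists N, forall n, (N <= n)%nat ->
  M * (INR n + 1) ^ 2 <= (1 + d) ^ n.
Proof.
move=> hM hd.
have hd3 : 0 < d ^ 3 by apply: pow_lt.
have [N0 hN0] := INR_archimed (d ^ 3) (18 * M) (Rlt_gt _ _ hd3).
exists (N0 + 5)%nat => n hn.
have -> : n = (n - 3).+3 by lia.
set p := (n - 3)%nat.
have hp : (N0 + 2 <= p)%nat by rewrite /p; lia.
have hx : INR N0 + 2 <= INR p.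
  have := le_INR _ _ (ssrnat.leP hp); rewrite plus_INR /=; lra.
have hb := binq p.+3 3 (Rlt_le _ _ hd).
have hc := C3 p.
have hN : 0 <= INR N0 := pos_INR N0.
rewrite S_INR S_INR S_INR.
set x := INR p in hx hc *.
set C := INR ('C(p.+3, 3)) in hb hc.
have h1 : (x + 4) ^ 2 <= 3 * ((x + 2) * (x + 1)) by simpl; nra.
have h2 : 18 * M <= (x + 3) * d ^ 3 by nra.
have h3 : 0 <= (x + 2) * (x + 1) by nra.
have h4 : 6 * M * (x + 4) ^ 2 <= (x + 3) * (x + 2) * (x + 1) * d ^ 3.
  have : 6 * M * (x + 4) ^ 2 <= 18 * M * ((x + 2) * (x + 1)) by nra.
  have : 18 * M * ((x + 2) * (x + 1)) <= (x + 3) * d ^ 3 * ((x + 2) * (x + 1)).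
    by apply: Rmult_le_compat_r.
  nra.
have e4 : x + 1 + 1 + 1 + 1 = x + 4 by lra.
rewrite e4; nra.
Qed.
End Anal.

Section Final.
Local Open Scope R_scope.
Lemma final_real (F : fieldType) (m : nat) (w : nat -> bool) (L : R) :
    lim_root (codim_gr (@mulS F m w) (inA0 m w) (inA1 m w)) L ->
    limsup_root_le (codim_gr (@mulS F m w) (inAs0 m w) (inA1 m w)) (L + 1)%R.
Proof.
move=> hL eps heps.
set a := codim_gr (@mulS F m w) (inA0 m w) (inA1 m w).
set c := codim_gr (@mulS F m w) (inAs0 m w) (inA1 m w).
have hL0 : 0 <= L.
  apply: Rnot_lt_le => hlt.
  have [N hN] := hL (- L) ltac:(lra).
  have := hN N (Nat.le_refl N); rewrite /R_dist => h; fold a in h.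
  have := Rle_abs (nroot N (a N) - L); have := nroot_ge0 N (a N); lra.
set e := eps / 3.
have he : 0 < e by rewrite /e; lra.
set q := L + e.
have hq : 0 < q by rewrite /q; lra.
have [N1 hN1] := hL e he.
have ha : forall t, (N1 + 1 <= t)%nat -> INR (a t) <= q ^ t.
  move=> t ht; apply: pow_of_nroot; first by lia.
  have := hN1 t ltac:(apply/leP; lia); rewrite /R_dist => h; fold a in h.
  have := Rle_abs (nroot t (a t) - L); rewrite /q; lra.
have [K [hK1 hK]] := bound_start hq ha.
have hQ : forall n, 1 <= (1 + q) ^ n by move=> n; apply: pow_R1_Rle; lra.
have hterm : forall n t, (t <= n)%nat ->
    INR ((t == 0%nat) + 'C(n, t) * a t)%nat <= (1 + K) * (1 + q) ^ n.
  move=> n t htn; rewrite -!multE -!plusE plus_INR mult_INR.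
  have h1 : INR (t == 0%nat) <= 1 by case: (t == 0%nat); rewrite /= ; lra.
  have h2 := binq n t (Rlt_le _ _ hq).
  have h3 := hK t.
  have h4 : 0 <= INR 'C(n, t) := pos_INR _.
  have h5 := hQ n.
  have h6 : INR 'C(n, t) * INR (a t) <= INR 'C(n, t) * (K * q ^ t) by apply: Rmult_le_compat_l.
  nra.
have hc : forall n, INR (c n) <= (1 + K) * (INR n + 1) ^ 2 * (1 + q) ^ n.
  move=> n; apply: Rle_trans (le_INR _ _ (ssrnat.leP (cgr_bound F m w n))) _.
  have hB : 0 <= (1 + K) * (1 + q) ^ n by have := hQ n; nra.
  have hB' : 0 <= (INR n + 1) * ((1 + K) * (1 + q) ^ n) by have := pos_INR n; nra.
  apply: Rle_trans (INR_sum_le hB' _) _.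
    move=> k; apply: Rle_trans (INR_sum_le hB _) _.
      move=> j; apply: hterm.
      have := ltn_ord j; have := ltn_ord k; lia.
    apply: Rmult_le_compat_r => //.
    have := le_INR _ _ (ssrnat.leP (ltn_ord k)); rewrite !S_INR; lra.
  rewrite S_INR /=; lra.
have hd : 0 < e / (1 + q) by apply: Rdiv_lt_0_compat; lra.
have [N2 hN2] := poly_bound (M := 1 + K) ltac:(lra) hd.
exists (N2 + 1)%nat => n hn.
have hy : (1 + e / (1 + q)) * (1 + q) = 1 + q + e.
  rewrite /Rdiv Rmult_plus_distr_r Rmult_1_l Rmult_assoc Rinv_l; lra.
apply: Rle_trans (nroot_of_pow (y := 1 + q + e) _ _ _) _.
- by lia.
- lra.
- rewrite -hy Rpow_mult_distr; apply: Rle_trans (hc n) _.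
  apply: Rmult_le_compat_r; first by have := hQ n; lra.
  apply: hN2; lia.
- rewrite /q /e; lra.
Qed.
End Final.

Theorem lemma10 (F : fieldType) (charF0 : GRing.pchar F =i pred0)
  (m : nat) (w : nat -> bool) (hm : (2 <= m)%N)
  (hw : periodic_word w \/ sturmian_word w) :
  forall L : R,
    lim_root (codim_gr (@mulS F m w) (inA0 m w) (inA1 m w)) L ->
    limsup_root_le (codim_gr (@mulS F m w) (inAs0 m w) (inA1 m w)) (L + 1)%R.
Proof. move=> L; exact: final_real. Qed.
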